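(* Let $k>l\ge0$ be integers, $\theta\in\mathbb{R}$, $\xi=e^{i\theta}$, $f:\mathbb{N}\to[0,\infty)$, and $A=\xi(a^\dagger)^ka^l+\xi^*(a^\dagger)^la^k+f(a^\dagger a)$ with domain $\mathcal{D}_0$. Let $K_\pm=\operatorname{Ran}(A\pm i)^\perp$ and $\psi^\pm\in K_\pm$, with coefficients $c^\pm_n=\langle\phi_n,\psi^\pm\rangle$. Then for all $n\in\mathbb{N}$, $$e^{-i\theta}\beta^{kl}_nc^\pm_{n+(k-l)}+e^{i\theta}\beta^{lk}_nc^\pm_{n-(k-l)}+(f(n)\mp i)c^\pm_n=0,$$ with the convention $c^\pm_m=0$ for $m<0$.
   Context: $\mathbb{N}=\{0,1,2,\dots\}$. $\mathcal{H}$ is a separable complex Hilbert space, inner product antilinear in the first argument, with orthonormal basis $(\phi_n)_{n\in\mathbb{N}}$; $\mathcal{D}_0$ is the set of finite linear combinations of the $\phi_n$. The operators $a,a^\dagger$ have domain $\mathcal{D}_0$ and act by $a\phi_n=\sqrt{n}\,\phi_{n-1}$ ($a\phi_0=0$), $a^\dagger\phi_n=\sqrt{n+1}\,\phi_{n+1}$, extended linearly. $f(a^\dagger a)$ has domain $\mathcal{D}_0$ and $f(a^\dagger a)\phi_n=f(n)\phi_n$. For integers $x$ and $s\ge0$, $(x,s)=x(x+1)\cdots(x+s-1)$ ($=1$ if $s=0$), with the convention $(x,s)=0$ whenever $x$ is a negative integer; for integers $n$ and $k,l\ge0$, $\beta^{kl}_n=\sqrt{(n-l+1,l)(n-l+1,k)}$.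 *)

(* Defs.v *)
From mathcomp Require Import all_boot all_order all_algebra.
From mathcomp Require Import all_classical all_reals all_analysis.
From mathcomp Require Import complex.
Set Implicit Arguments. Unset Strict Implicit. Unset Printing Implicit Defensive.
Import Order.TTheory GRing.Theory Num.Theory.
Local Open Scope ring_scope.
Local Open Scope complex_scope.

(* The Hilbert space H is modelled as l^2(N) over C = R[i]: a vector is its
   coefficient sequence (n |-> <phi_n, x>), so phi_n is the n-th unit sequence. *)
Section Defs.
Variable R : realType.
Local Notation C := R[i].

Definition l2 (x : nat -> C) : Prop :=
  exists B : R, forall N : nat, \sum_(n < N) `|x n| ^+ 2 <= B%:C.

Definition finsupp (x : nat -> C) : Prop :=
  exists N : nat, forall n : nat, (N <= n)%N -> x n = 0.

(* a phi_n = sqrt n phi_{n-1}, a phi_0 = 0, extended linearly: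
   coefficientwise (a x)_n = sqrt(n+1) x_{n+1} *)
Definition ann (x : nat -> C) : nat -> C :=
  fun n => (Num.sqrt (n.+1)%:R : R)%:C * x n.+1.

(* a^dag phi_n = sqrt(n+1) phi_{n+1}: (a^dag x)_0 = 0, (a^dag x)_{m+1} = sqrt(m+1) x_m *)
Definition cre (x : nat -> C) : nat -> C :=
  fun n => if n is m.+1 then (Num.sqrt (m.+1)%:R : R)%:C * x m else 0.

Definition expi (theta : R) : C := cos theta +i* sin theta.

Definition opA (k l : nat) (theta : R) (f : nat -> R) (x : nat -> C) : nat -> C :=
  fun n => expi theta * iter k cre (iter l ann x) n
         + (expi theta)^* * iter l cre (iter k ann x) n
         + (f n)%:C * x n.

Definition pmi (pm : bool) : C := if pm then 'i else - 'i.
Definition opApm (pm : bool) (k l : nat) (theta : R) (f : nat -> R) (x : nat -> C)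
  : nat -> C := fun n => opA k l theta f x n + pmi pm * x n.

(* psi in Ran(B)^perp, B with domain D_0: <B phi, psi> = 0 for all phi in D_0,
   the inner product (antilinear in the first argument) of the finitely
   supported vector B phi with psi being the finite sum over any support bound. *)
Definition orth_ran (B : (nat -> C) -> (nat -> C)) (psi : nat -> C) : Prop :=
  forall phi, finsupp phi ->
  forall M : nat, (forall n, (M <= n)%N -> B phi n = 0) ->
  \sum_(n < M) (B phi n)^* * psi n = 0.

Definition coefz (psi : nat -> C) (m : int) : C :=
  if m is Posz m' then psi m' else 0.
End Defs.

Definition poch (x : int) (s : nat) : int :=
  if (x < 0)%R then 0 else \prod_(i < s) (x + (i : nat)%:Z)%R.

Definition beta {R : realType} (k l : nat) (n : int) : R :=
  Num.sqrt ((poch (n - l%:Z + 1) l * poch (n - l%:Z + 1) k)%R%:~R).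

(* Main.v *)
Require Import Defs.
From mathcomp Require Import all_boot all_order all_algebra.
From mathcomp Require Import all_classical all_reals all_analysis.
From mathcomp Require Import complex.
From mathcomp Require Import zify.
Import Order.TTheory GRing.Theory Num.Theory.
Local Open Scope ring_scope.
Local Open Scope complex_scope.

Definition P (n s : nat) : nat := (\prod_(i < s) (n + 1 + i))%N.

Section Aux.
Variable R : realType.
Local Notation C := R[i].

Definition delta (n : nat) : nat -> C := fun j => if j == n then 1 else 0.

Lemma P0 n : P n 0 = 1%N.
Proof. by rewrite /P big_ord0. Qed.

Lemma PSl n l : P n l.+1 = (n.+1 * P n.+1 l)%N.
Proof.
rewrite /P big_ord_recl /= addn0 addn1; congr (_ * _)%N.
by apply: eq_bigr => i _; rewrite /bump /=; lia.
Qed.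

Lemma PSr n k : P n k.+1 = (P n k * (n + 1 + k))%N.
Proof. by rewrite /P big_ord_recr. Qed.

Lemma sqrtCM (a b : nat) :
  (Num.sqrt (a * b)%N%:R : R)%:C = (Num.sqrt a%:R : R)%:C * (Num.sqrt b%:R : R)%:C.
Proof. by rewrite natrM sqrtrM ?ler0n // rmorphM. Qed.

Lemma iter_ann l (x : nat -> C) n :
  iter l (@ann R) x n = (Num.sqrt (P n l)%:R : R)%:C * x (n + l)%N.
Proof.
elim: l n => [|l IH] n.
  by rewrite /= P0 sqrtr1 mul1r addn0.
rewrite /= {1}/ann IH PSl sqrtCM mulrA addSnnS.
done.
Qed.

Lemma iter_cre k (x : nat -> C) n :
  iter k (@cre R) x n =
  if (k <= n)%N then (Num.sqrt (P (n - k) k)%:R : R)%:C * x (n - k)%N else 0.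
Proof.
elim: k n => [|k IH] n.
  by rewrite /= P0 sqrtr1 mul1r subn0.
case: n => [|m] //=.
rewrite IH ltnS; case: ifP => km; last by rewrite mulr0.
rewrite subSS PSr mulnC sqrtCM mulrA.
have -> : (m - k + 1 + k = m.+1)%N by lia.
done.
Qed.

Lemma T_eq k l n j :
  iter k (@cre R) (iter l (@ann R) (delta n)) j =
  if (l <= n)%N && (j == n - l + k)%N
  then (Num.sqrt (P (n - l) k * P (n - l) l)%N%:R : R)%:C else 0.
Proof.
rewrite iter_cre; case: ifP => kj.
  rewrite iter_ann /delta.
  case: ifP => e.
    have -> : ((l <= n) && (j == n - l + k))%N = true by apply/andP; split; lia.
    rewrite mulr1 sqrtCM.
    by have -> : (j - k = n - l)%N by lia.
  rewrite !mulr0.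
  by have -> : ((l <= n) && (j == n - l + k))%N = false by apply/negbTE/negP => /andP[]; lia.
by have -> : ((l <= n) && (j == n - l + k))%N = false by apply/negbTE/negP => /andP[]; lia.
Qed.

Lemma conjR (x : R) : Num.conj (x%:C : C) = x%:C.
Proof. exact: conjc_real. Qed.

Lemma sum_pick M t (c : bool) (v : C) (psi : nat -> C) : (t < M)%N ->
  \sum_(j < M) (if c && (j == t :> nat) then v else 0)^* * psi j =
  if c then v^* * psi t else 0.
Proof.
move=> tM.
rewrite (bigD1 (Ordinal tM)) //= eqxx andbT big1 ?addr0.
  by case: c => //; rewrite conjC0 mul0r.
move=> i /negbTE hi.
have -> : (i == t :> nat) = false by exact: hi.
by rewrite andbF conjC0 mul0r.
Qed.

Lemma sum_pick1 M t (v : C) (psi : nat -> C) : (t < M)%N ->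
  \sum_(j < M) (if (j == t :> nat) then v else 0)^* * psi j = v^* * psi t.
Proof. by move=> tM; rewrite -(@sum_pick M t true v psi tM). Qed.

Lemma poch_eq (n b s : nat) : (b <= n)%N ->
  poch (n%:Z - b%:Z + 1) s = (P (n - b) s)%:Z.
Proof.
move=> bn.
have -> : (n%:Z - b%:Z + 1 = (n - b + 1)%N%:Z)%R.
  by rewrite PoszD subzn.
rewrite /poch ltNge /= /P.
rewrite (big_morph Posz PoszM (erefl 1%:Z)).
by apply: eq_bigr => i _; rewrite PoszD.
Qed.

Lemma poch_neg (n b : nat) : (n < b)%N ->
  poch (n%:Z - b%:Z + 1) b = 0.
Proof.
move=> nb; rewrite /poch; case: ifP => // hx.
case: b nb hx => [//|b] nb hx.
rewrite big_ord_recl /= addr0.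
have -> : (n%:Z - b.+1%:Z + 1 = 0)%R.
  move: hx; lia.
by rewrite mul0r.
Qed.


Lemma beta_eq a b (n : nat) : @beta R a b n =
  if (b <= n)%N then Num.sqrt ((P (n - b) a * P (n - b) b)%N%:R) else 0.
Proof.
rewrite /beta; case: ifP => bn.
  by rewrite !poch_eq // -PoszM mulnC.
by rewrite poch_neg ?mul0r ?sqrtr0 //; lia.
Qed.

Lemma expiN (t : R) : expi (- t) = Num.conj (expi t).
Proof. by rewrite /expi cosN sinN. Qed.

Lemma conj_pmi pm : Num.conj (@pmi R pm) = - pmi R pm.
Proof.
case: pm => /=; apply/eqP; rewrite eq_complex /= ?oppr0 ?opprK !eqxx //.
Qed.

End Aux.


Lemma opApm_delta (R : realType) pm k l theta (f : nat -> R) n j :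
  opApm pm k l theta f (delta R n) j =
  (if (l <= n)%N && (j == n - l + k)%N
   then expi theta * (Num.sqrt (P (n - l) k * P (n - l) l)%N%:R : R)%:C else 0)
  + (if (k <= n)%N && (j == n - k + l)%N
   then (expi theta)^* * (Num.sqrt (P (n - k) l * P (n - k) k)%N%:R : R)%:C else 0)
  + (if true && (j == n) then (f n)%:C + pmi R pm else 0).
Proof.
rewrite /opApm /opA !T_eq /= /delta -!addrA; congr (_ + _).
  by case: ifP; rewrite ?mulr0.
congr (_ + _); first by case: ifP; rewrite ?mulr0.
by case: eqP => [->|]; rewrite ?mulr1 ?mulr0 ?addr0.
Qed.

Theorem lemma4p6 (R : realType) (k l : nat) (theta : R) (f : nat -> R) :
  (l < k)%N -> (forall n, 0 <= f n) ->
  forall (pm : bool) (psi : nat -> R[i]),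
  l2 psi -> orth_ran (opApm pm k l theta f) psi ->
  forall n : nat,
    expi (- theta) * (@beta R k l n)%:C * psi (n + (k - l))%N
    + expi theta * (@beta R l k n)%:C * coefz psi (n%:Z - (k - l)%N%:Z)
    + ((f n)%:C - @pmi R pm) * psi n = 0.
Proof.
move=> lk f0 pm psi _ Horth n.
have fs : finsupp (delta R n).
  by exists n.+1 => j hj; rewrite /delta; case: eqP => // e; lia.
have H0 : forall j, ((n + k).+1 <= j)%N -> opApm pm k l theta f (delta R n) j = 0.
  move=> j hj; rewrite opApm_delta.
  have e1 : (j == n - l + k)%N = false by lia.
  have e2 : (j == n - k + l)%N = false by lia.
  have e3 : (j == n)%N = false by lia.
  by rewrite e1 e2 e3 !andbF !addr0.
move: (Horth _ fs _ H0).
under eq_bigr => j _ do rewrite opApm_delta !rmorphD /= !mulrDl.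
rewrite !big_split /= !sum_pick ?sum_pick1; try lia.
rewrite !beta_eq expiN !rmorphM /= rmorphD /= conj_pmi !conjR conjCK.
case: (leqP l n) => ln; case: (leqP k n) => kn.
- have e1 : (n + (k - l) = n - l + k)%N by lia.
  have e2 : (n%:Z - (k - l)%N%:Z = (n - k + l)%N%:Z)%R by lia.
  by rewrite e1 e2 /coefz.
- have e1 : (n + (k - l) = n - l + k)%N by lia.
  by rewrite e1 rmorph0 mulr0 mul0r addr0.
- lia.
- by rewrite rmorph0 !mulr0 !mul0r !add0r.
Qed.
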